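(* Let $j\ge6$ and let $H=(1,4,a,\dots,a,4,1)$ be a sequence of nonnegative integers of socle degree $j$, symmetric about $j/2$, with $a\le6$. Then $H$ is a Gorenstein sequence for $R=K[w,x,y,z]$ if and only if $\Delta H_{\le j/2}$ is an $O$-sequence, equivalently if and only if $\Delta H_{\le j/2}$ is nonincreasing from the first index at which it fails to increase. The values $a=2$ and $a=3$ cannot occur.
   Context: $K$ algebraically closed. A Gorenstein sequence of socle degree $j$ is the Hilbert function of a standard graded Artinian Gorenstein quotient of $R$ with top nonzero degree $j$. $\Delta H_i=h_i-h_{i-1}$ ($h_{-1}=0$), $\Delta H_{\le j/2}=(\Delta H_i)_{0\le i\le j/2}$. For $c,d>0$ write $c=\sum_{i=1}^d\binom{k(i)}{i}$ with $k(d)>\dots>k(1)\ge0$ and $c^{(d)}=\sum_{i=1}^d\binom{k(i)+1}{i+1}$, $0^{(d)}=0$; an $O$-sequence is $(1,t_1,\dots)$ with $t_i\ge0$ and $t_{d+1}\le t_d^{(d)}$ for all $d\ge1$. *)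

(* Defs.v *)
From mathcomp Require Import all_boot all_order all_algebra.
From mathcomp Require Import mpoly.
Set Implicit Arguments. Unset Strict Implicit. Unset Printing Implicit Defensive.
Import GRing.Theory.
Local Open Scope ring_scope.

(* R = K[w,x,y,z] is {mpoly K[4]}, the variables being 'X_0,...,'X_3.
   An ideal is represented as a predicate (Prop) on R. *)

Section Gor.
Variable K : closedFieldType.
Local Notation R := {mpoly K[4]}.

Definition is_ideal (I : R -> Prop) : Prop :=
  [/\ I 0,
      (forall p q, I p -> I q -> I (p + q)) &
      (forall r p, I p -> I (r * p))].

Definition is_homogeneous_ideal (I : R -> Prop) : Prop :=
  is_ideal I /\ (forall p d, I p -> I (pihomog mdeg d p)).

(* (R/I)_i has dimension n : there are n forms of degree i whose classes form
   a K-basis of (R/I)_i = R_i / I_i. *)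
Definition hilb_val (I : R -> Prop) (i n : nat) : Prop :=
  exists s : 'I_n -> R,
    [/\ (forall k, s k \is i.-homog),
        (forall c : 'I_n -> K, I (\sum_(k < n) c k *: s k) -> forall k, c k = 0) &
        (forall p : R, p \is i.-homog ->
           exists c : 'I_n -> K, I (p - \sum_(k < n) c k *: s k))].

(* R/I is Gorenstein: its socle 0 :_{R/I} (w,x,y,z) is one-dimensional. *)
Definition gorenstein_quot (I : R -> Prop) : Prop :=
  exists s : R,
    [/\ ~ I s,
        (forall v : 'I_4, I ('X_v * s)) &
        (forall f : R, (forall v : 'I_4, I ('X_v * f)) ->
           exists c : K, I (f - c *: s))].

Definition gorenstein_sequence (h : nat -> nat) (j : nat) : Prop :=
  exists I : R -> Prop,
    [/\ is_homogeneous_ideal I,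
        gorenstein_quot I,
        (forall i, (i <= j)%N -> hilb_val I i (h i)),
        h j <> 0%N &
        (forall i, (j < i)%N -> hilb_val I i 0)].
End Gor.

Definition Hseq (j a : nat) (i : nat) : nat :=
  if i == 0%N then 1%N
  else if i == 1%N then 4%N
  else if i == j.-1 then 4%N
  else if i == j then 1%N
  else if (i < j)%N then a else 0%N.

Definition DeltaH (h : nat -> nat) (i : nat) : int :=
  (h i)%:Z - (if i is i'.+1 then (h i')%:Z else 0).

Definition DeltaH_half (h : nat -> nat) (j : nat) : seq int :=
  [seq DeltaH h i | i <- iota 0 (j./2).+1].

Definition macaulay_expansion (c d : nat) (k : nat -> nat) : Prop :=
  (forall i, (1 <= i)%N -> (i < d)%N -> (k i < k i.+1)%N) /\
  c = (\sum_(1 <= i < d.+1) 'C(k i, i))%N.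

(* v = c^{(d)} (the expansion is unique, so this is functional in c, d) *)
Definition macaulay_upper (c d v : nat) : Prop :=
  if c == 0%N then v = 0%N
  else exists k, macaulay_expansion c d k /\
                 v = (\sum_(1 <= i < d.+1) 'C((k i).+1, i.+1))%N.

Definition O_sequence (t : seq int) : Prop :=
  [/\ t`_0 = 1,
      (forall i, (i < size t)%N -> 0 <= t`_i) &
      (forall d, (1 <= d)%N -> (d.+1 < size t)%N ->
         exists v, macaulay_upper (absz (nth (0:int) t d)) d v /\ (absz (nth (0:int) t d.+1) <= v)%N)].

Definition fails_to_increase (t : seq int) (i : nat) : bool :=
  (1 <= i)%N && (i < size t)%N && (t`_i <= t`_i.-1).

Definition noninc_after_first_failure (t : seq int) : Prop :=
  forall i0, fails_to_increase t i0 ->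
    (forall i, (1 <= i < i0)%N -> ~~ fails_to_increase t i) ->
    forall i, (i0 <= i)%N -> (i.+1 < size t)%N -> t`_i.+1 <= t`_i.

(* Main.v *)
Require Import Defs.
From mathcomp Require Import all_boot all_order all_algebra.
From mathcomp Require Import mpoly.
From mathcomp Require Import zify ring.
From Stdlib Require Classical ClassicalEpsilon ClassicalDescription.

Module M_PA.
Import GRing.Theory Num.Theory.
Local Open Scope ring_scope.

Section PartA.
Variables (j a : nat).
Hypothesis hj : (6 <= j)%N.
Hypothesis ha : (a <= 6)%N.

Lemma Hseq0 : Hseq j a 0 = 1%N. Proof. by []. Qed.
Lemma Hseq1 : Hseq j a 1 = 4%N. Proof. by []. Qed.
Lemma Hseq_mid i : (2 <= i)%N -> (i <= j - 2)%N -> Hseq j a i = a.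
Proof.
move=> h1 h2; rewrite /Hseq.
have -> : (i == 0%N) = false by apply/negbTE; lia.
have -> : (i == 1%N) = false by apply/negbTE; lia.
have -> : (i == j.-1) = false by apply/negbTE; lia.
have -> : (i == j) = false by apply/negbTE; lia.
by have -> : (i < j)%N by lia.
Qed.

Definition t := DeltaH_half (Hseq j a) j.

Lemma size_t : size t = (j./2).+1.
Proof. by rewrite /t /DeltaH_half size_map size_iota. Qed.

Lemma nth_t i : (i <= j./2)%N -> t`_i = DeltaH (Hseq j a) i.
Proof.
move=> hi; rewrite /t /DeltaH_half (nth_map 0%N); last by rewrite size_iota.
by rewrite nth_iota.
Qed.

Lemma half_ge3 : (3 <= j./2)%N.
Proof. have : (3 <= (6:nat)./2)%N by []. move=> h. apply: leq_trans h _. by apply: half_leq. Qed.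

Lemma half_le i : (i <= j./2)%N -> (i <= j - 3)%N.
Proof. move=> hi. have := half_ge3. have : ((j./2).*2 <= j)%N by rewrite -{2}(odd_double_half j); lia. lia. Qed.

Lemma t0 : t`_0 = 1.
Proof. by rewrite nth_t. Qed.
Lemma t1 : t`_1 = 3%:Z.
Proof. rewrite nth_t; last by have := half_ge3; lia. by []. Qed.
Lemma t2 : t`_2 = a%:Z - 4%:Z.
Proof.
rewrite nth_t; last by have := half_ge3; lia.
rewrite /DeltaH Hseq_mid //. have := (@half_le 2); have := half_ge3. lia.
Qed.
Lemma t3 i : (3 <= i)%N -> (i < size t)%N -> t`_i = 0.
Proof.
rewrite size_t => h1 h2; rewrite nth_t; last by lia.
have := (@half_le i). move=> hl.
case: i h1 h2 hl => // i h1 h2 hl.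
rewrite /DeltaH !Hseq_mid; try lia; by rewrite subrr.
Qed.
End PartA.
Lemma t3' j a : (6 <= j)%N -> (a <= 6)%N -> forall i, (3 <= i)%N -> (i < size (t j a))%N -> nth (0:int) (t j a) i = 0.
Proof. exact: t3. Qed.

End M_PA.
Import M_PA.

Module M_PA2.
Import GRing.Theory Num.Theory.
Local Open Scope ring_scope.

Section PartA2.
Variables (j a : nat).
Hypothesis hj : (6 <= j)%N.
Hypothesis ha : (a <= 6)%N.

Lemma Oseq_iff : O_sequence (DeltaH_half (Hseq j a) j) <-> (4 <= a)%N.
Proof.
have h3 := @half_ge3 j hj.
have hs := size_t j a.
have T0 := t0 j a; have T1 := @t1 j a hj ha; have T2 := @t2 j a hj ha; have T3 := @t3 j a hj ha.
rewrite /O_sequence -/(t j a); split.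
  case=> _ /(_ 2%N) + _; rewrite T2; last by rewrite hs; lia.
move=> h4; split; first exact: T0.
  move=> i; rewrite hs => hi.
  case: i hi => [|[|[|i]]] hi; first by rewrite T0.
  - by rewrite T1.
  - rewrite T2; lia.
  - rewrite T3 // ?hs; lia.
move=> d hd; rewrite hs => hds.
case: d hd hds => [|[|[|d]]] // _ hds.
- exists 6%N; split; last by rewrite T2; lia.
  rewrite T1 /macaulay_upper /=. exists (fun _ => 3%N); split; last first.
    by rewrite big_nat1.
  split; first by move=> i h1 h2; lia.
  by rewrite big_nat1.
- rewrite (@t3' j a hj ha 3%N) //; last by rewrite hs; lia.
  rewrite T2.
  have -> : absz (a%:Z - 4%:Z) = (a - 4)%N by rewrite subzn //; lia.
  case E: (a - 4)%N => [|[|[|c]]].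
  + by exists 0%N.
  + exists 1%N; split => //=.
    exists (fun i => if i == 1%N then 0%N else 2%N); split; last first.
      by rewrite big_nat_recr //= big_nat1.
    split; last by rewrite big_nat_recr //= big_nat1.
    move=> i h1 h2. have -> : i = 1%N by lia. by [].
  + exists 2%N; split => //=.
    exists (fun i => if i == 1%N then 1%N else 2%N); split; last first.
      by rewrite big_nat_recr //= big_nat1.
    split; last by rewrite big_nat_recr //= big_nat1.
    move=> i h1 h2. have -> : i = 1%N by lia. by [].
  + lia.
- have e1 := (@t3' j a hj ha d.+3 isT); have e2 := (@t3' j a hj ha d.+4 isT).
  rewrite e1 ?e2 ?hs //; try lia.
  exists 0%N; split => //.
Qed.

Lemma noninc_iff : noninc_after_first_failure (DeltaH_half (Hseq j a) j) <-> (4 <= a)%N.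
Proof.
have h3 := @half_ge3 j hj.
have hs := size_t j a.
have T0 := t0 j a; have T1 := @t1 j a hj ha; have T2 := @t2 j a hj ha; have T3 := @t3 j a hj ha.
rewrite /noninc_after_first_failure -/(t j a); split.
  move=> /(_ 2%N) H.
  have : (t j a)`_3 <= (t j a)`_2.
    apply: H => //.
    - rewrite /fails_to_increase hs T2 T1. apply/andP; split; first lia. lia.
    - move=> i /andP[h1 h2]. have -> : i = 1%N by lia.
      rewrite /fails_to_increase [1.-1]/= T1 T0; lia.
    - by rewrite hs; lia.
  rewrite T2 T3 // ?hs; lia.
move=> h4 i0 hf _ i hi hi1.
have hi0 : (2 <= i0)%N.
  move: hf; rewrite /fails_to_increase; case: i0 {hi} => [|[|i0]] //.
  rewrite [1.-1]/= T1 T0; lia.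
case: i hi hi1 => [|[|[|i]]] hi hi1; try lia.
  rewrite T2 T3 //; lia.
rewrite !T3 //; lia.
Qed.
End PartA2.

End M_PA2.
Import M_PA2.

Module M_MA.
Set Implicit Arguments. Unset Strict Implicit. Unset Printing Implicit Defensive.

Lemma sum_ge_count (b : nat -> nat) m : (forall e, e < m -> 0 < b e) ->
  m <= \sum_(0 <= e < m) b e.
Proof.
elim: m => [|m IH] h; first by [].
rewrite big_nat_recr //=.
have := IH (fun e he => h e (ltnW he)). have := h m (ltnSn m). lia.
Qed.

Lemma sum_le_ext (b : nat -> nat) m n : m <= n ->
  \sum_(0 <= e < m) b e <= \sum_(0 <= e < n) b e.
Proof.
move=> hmn; rewrite (big_cat_nat (n:=m) _ hmn) //=. by apply: leq_addr.
Qed.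

Lemma arith (k : nat) (b c : nat -> nat) :
  \sum_(0 <= e < k.+1) b e <= k ->
  (forall e, 0 < e <= k.+1 -> c e <= b e.-1) ->
  (forall e, e < k -> b e <= k - e -> c e <= b e) ->
  (forall e, e <= k -> b e = 0 -> c e = 0) ->
  \sum_(0 <= e < k.+2) c e <= \sum_(0 <= e < k.+1) b e.
Proof.
move=> hsum h1 h2 h3.
have hex : exists e, (e <= k) && (b e == 0).
  case: (boolP (has (fun e => b e == 0) (iota 0 k.+1))).
    case/hasP=> e; rewrite mem_iota => /andP[_ he] hb. exists e.
    by rewrite hb andbT.
  move/hasPn=> H.
  have : k.+1 <= \sum_(0 <= e < k.+1) b e.
    apply: sum_ge_count => e he. have := H e. rewrite mem_iota he /= => /(_ isT).
    by rewrite lt0n.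
  lia.
case: (ex_minnP hex) => g /andP[hgk /eqP hbg] hmin.
have hlt : forall e, e < g -> 0 < b e.
  move=> e heg; rewrite lt0n; apply/negP => /eqP he.
  have := hmin e; rewrite he eqxx andbT. have -> : e <= k by lia. move=> /(_ isT). lia.
have hb : forall e, e < g -> b e <= k - e.
  move=> e heg.
  have s1 : e <= \sum_(0 <= e' < e) b e'.
    apply: sum_ge_count => e' he'. apply: hlt. lia.
  have s2 : \sum_(0 <= e' < e.+1) b e' <= k.
    apply: leq_trans hsum. apply: sum_le_ext. lia.
  move: s2; rewrite big_nat_recr //=. lia.
rewrite (big_cat_nat (n:=g) _ (_ : g <= k.+2)) //=; last by lia.
rewrite (big_cat_nat (n:=g) _ (_ : g <= k.+1)) //=; last by lia.
apply: leq_add.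
  rewrite big_nat_cond [X in _ <= X]big_nat_cond.
  apply: leq_sum => e /andP[/andP[_ he] _]. apply: h2; [lia | exact: hb].
rewrite big_ltn; last by lia.
rewrite h3 // add0n.
rewrite big_add1 /= big_nat_cond [X in _ <= X]big_nat_cond.
apply: (@leq_trans (\sum_(g <= i < k.+1 | (g <= i < k.+1) && true) b i)).
  apply: leq_sum => e /andP[/andP[h h'] _]. have := h1 e.+1. apply. lia.
by [].
Qed.

End M_MA.
Import M_MA.

Module M_MB.
Set Implicit Arguments. Unset Strict Implicit. Unset Printing Implicit Defensive.

Fixpoint mons (n k : nat) : seq (seq nat) :=
  if n is n'.+1 then flatten [seq [seq e :: u | u <- mons n' (k - e)] | e <- iota 0 k.+1]
  else (if k == 0 then [:: [::]] else [::]).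

Lemma mons_S n k : mons n.+1 k =
  flatten [seq [seq e :: u | u <- mons n (k - e)] | e <- iota 0 k.+1].
Proof. by []. Qed.

Lemma mem_mons n k s : (s \in mons n k) = (size s == n) && (sumn s == k).
Proof.
elim: n k s => [|n IH] k s.
  by case: s => [|x s] /=; case: k => //.
rewrite mons_S; apply/flattenP/idP.
  case=> l /mapP[e]; rewrite mem_iota => /andP[_ he] -> /mapP[u].
  rewrite IH => /andP[/eqP hu /eqP hs] -> /=. rewrite hu eqxx /=. apply/eqP. lia.
case: s => [|e u] // /andP[/eqP hu /eqP hs]; rewrite /= in hu hs.
exists [seq e :: u0 | u0 <- mons n (k - e)].
  apply: (map_f (fun e => [seq e :: u0 | u0 <- mons n (k - e)])); rewrite mem_iota; apply/andP; split => //. lia.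
apply: (map_f (cons e)). rewrite IH. apply/andP; split; apply/eqP; [by case: hu | move: hs; rewrite /=; lia].
Qed.

Lemma uniq_flat_cons (G : nat -> seq (seq nat)) lo len :
  (forall e, uniq (G e)) ->
  uniq (flatten [seq [seq e :: u | u <- G e] | e <- iota lo len]).
Proof.
move=> hG; elim: len lo => [|len IH] lo //=.
rewrite cat_uniq IH andbT map_inj_uniq ?hG //; last by move=> x y [].
apply/hasPn => s /flattenP[l /mapP[e]]; rewrite mem_iota => /andP[he _] -> /mapP[u _ ->].
apply/mapP => -[v _ [heq _]]. lia.
Qed.

Lemma uniq_mons n k : uniq (mons n k).
Proof.
elim: n k => [|n IH] k; first by case: k.
rewrite mons_S; exact: uniq_flat_cons.
Qed.

Definition dec (s : seq nat) i := set_nth 0 s i (nth 0 s i).-1.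

Definition dc (P : pred (seq nat)) := forall s i, P s -> 0 < nth 0 s i -> P (dec s i).

Lemma count_slices P n k : count P (mons n.+1 k) =
  \sum_(0 <= e < k.+1) count (fun u => P (e :: u)) (mons n (k - e)).
Proof.
rewrite mons_S count_flatten -map_comp /index_iota subn0 sumnE big_map.
apply: eq_bigr => e _ /=. by rewrite count_map.
Qed.

Lemma dc_slice P e : dc P -> dc (fun u => P (e :: u)).
Proof. move=> h u i hu hi. exact: (h (e :: u) i.+1). Qed.

Lemma dc_head P e u : dc P -> P (e.+1 :: u) -> P (e :: u).
Proof. move=> h hu. exact: (h (e.+1 :: u) 0). Qed.

Lemma term_le_sum (F : nat -> nat) n e : e < n -> F e <= \sum_(0 <= i < n) F i.
Proof.
move=> he; rewrite (big_cat_nat (n:=e)) //=; last by lia.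
rewrite (big_ltn he) addnCA; exact: leq_addr.
Qed.

Lemma mac_zero n : forall P, dc P -> forall k,
  count P (mons n k) = 0 -> count P (mons n k.+1) = 0.
Proof.
elim: n => [|n IH] P hP k; first by [].
rewrite !count_slices => H.
have Hb : forall e, e < k.+1 -> count (fun u => P (e :: u)) (mons n (k - e)) = 0.
  move=> e he; have := term_le_sum (fun e => count (fun u => P (e :: u)) (mons n (k - e))) he.
  rewrite H; lia.
rewrite big_nat_recr //=.
have -> : \sum_(0 <= i < k.+1) count (fun u => P (i :: u)) (mons n (k.+1 - i)) = 0.
  rewrite big_nat_cond; apply: big1 => e /andP[/andP[_ he] _].
  have -> : k.+1 - e = (k - e).+1 by lia.
  apply: IH; [exact: dc_slice | exact: Hb].
rewrite add0n subnn.
apply/eqP; rewrite -leqn0.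
apply: (@leq_trans (count (fun u => P (k :: u)) (mons n 0))).
  apply: sub_count => u /=. exact: dc_head.
have := Hb k (ltnSn k); rewrite subnn => ->. by [].
Qed.

Lemma mac n : forall P, dc P -> forall k, 0 < k ->
  count P (mons n k) <= k -> count P (mons n k.+1) <= count P (mons n k).
Proof.
elim: n => [|n IH] P hP k hk; first by [].
rewrite !count_slices => hsum.
apply: arith => //.
- move=> e /andP[he1 he2].
  have -> : k.+1 - e = k - e.-1 by lia.
  apply: sub_count => u /=. case: e he1 {he2} => // e _. exact: dc_head.
- move=> e he hb.
  have -> : k.+1 - e = (k - e).+1 by lia.
  apply: IH => //; [exact: dc_slice | lia].
- move=> e he hb.
  have -> : k.+1 - e = (k - e).+1 by lia.
  apply: mac_zero => //; exact: dc_slice.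
Qed.

End M_MB.
Import M_MB.

Module M_GA.
Set Implicit Arguments. Unset Strict Implicit. Unset Printing Implicit Defensive.
Import GRing.Theory.
Local Open Scope ring_scope.

Section Ideal.
Variable K : closedFieldType.
Local Notation R := {mpoly K[4]}.
Variable I : R -> Prop.
Hypothesis hI : is_ideal I.

Lemma I0 : I 0. Proof. by case: hI. Qed.
Lemma ID p q : I p -> I q -> I (p + q). Proof. by case: hI => _ h _; apply: h. Qed.
Lemma IM r p : I p -> I (r * p). Proof. by case: hI => _ _ h; apply: h. Qed.
Lemma IZ c p : I p -> I (c *: p). Proof. by move=> h; rewrite -mul_mpolyC; apply: IM. Qed.
Lemma IN p : I p -> I (- p). Proof. by move=> h; rewrite -scaleN1r; apply: IZ. Qed.
Lemma IB p q : I p -> I q -> I (p - q). Proof. by move=> h1 h2; apply: ID => //; apply: IN. Qed.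
Lemma Isum n (F : 'I_n -> R) : (forall k, I (F k)) -> I (\sum_(k < n) F k).
Proof. move=> h; apply: (big_ind I) => //; [exact: I0 | exact: ID]. Qed.

Lemma dim_le n m (s : 'I_n -> R) (t : 'I_m -> R) :
  (forall k, exists c : 'I_n -> K, I (t k - \sum_(l < n) c l *: s l)) ->
  (forall c : 'I_m -> K, I (\sum_(k < m) c k *: t k) -> forall k, c k = 0) ->
  (m <= n)%N.
Proof.
move=> hsp hind; rewrite leqNgt; apply/negP => hnm.
pose C k := proj1_sig (ClassicalEpsilon.constructive_indefinite_description _ (hsp k)).
have hC k : I (t k - \sum_l C k l *: s l).
  exact: (proj2_sig (ClassicalEpsilon.constructive_indefinite_description _ (hsp k))).
pose M : 'M[K]_(m, n) := \matrix_(k, l) C k l.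
have hrk : (0 < \rank (kermx M))%N.
  rewrite mxrank_ker; have := rank_leq_col M; lia.
have [i hi] : exists i, row i (kermx M) != 0.
  case: (boolP [exists i, row i (kermx M) != 0]) => [/existsP//|/existsPn H].
  have : kermx M = 0.
    apply/row_matrixP => i; rewrite row0. by move/negPn/eqP: (H i).
  by move=> h0; move: hrk; rewrite h0 mxrank0.
pose u := row i (kermx M).
have hu : u *m M = 0 by rewrite /u -row_mul mulmx_ker row0.
have hsum : I (\sum_k u 0 k *: t k).
  have -> : \sum_k u 0 k *: t k = \sum_k u 0 k *: (t k - \sum_l C k l *: s l)
      + \sum_l (\sum_k u 0 k * C k l) *: s l.
    have -> : \sum_l (\sum_k u 0 k * C k l) *: s l = \sum_k u 0 k *: \sum_l C k l *: s l.
      rewrite (eq_bigr (fun l => \sum_k (u 0 k * C k l) *: s l)); last by move=> l _; rewrite scaler_suml.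
      rewrite exchange_big /=; apply: eq_bigr => k _; rewrite scaler_sumr; apply: eq_bigr => l _.
      by rewrite scalerA.
    rewrite -big_split /=; apply: eq_bigr => k _. by rewrite scalerBr subrK.
  have -> : \sum_l (\sum_k u 0 k * C k l) *: s l = 0.
    apply: big1 => l _.
    have e : \sum_k u 0 k * C k l = (u *m M) 0 l.
      rewrite [in RHS]mxE; apply: eq_bigr => k _; by rewrite [M k l]mxE.
    by rewrite e hu mxE scale0r.
  rewrite addr0; apply: Isum => k; exact: IZ.
have hu0 : u = 0.
  apply/rowP => k; rewrite [RHS]mxE; exact: (hind (fun k => u 0 k) hsum).
by move: hi; rewrite -/u hu0 eqxx.
Qed.
End Ideal.

End M_GA.
Import M_GA.

Module M_GB.
Set Implicit Arguments. Unset Strict Implicit. Unset Printing Implicit Defensive.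
Import Order.Theory GRing.Theory.
Local Open Scope ring_scope.

Section Coef.
Variable K : closedFieldType.
Local Notation R := {mpoly K[4]}.

Lemma mcoeff_pihomog d (p : R) x :
  (pihomog mdeg d p)@_x = if mdeg x == d then p@_x else 0.
Proof.
rewrite pihomogE raddf_sum /= big_mkcond /=.
under eq_bigr => m _ do rewrite mcoeffZ mcoeffX.
case: (boolP (x \in msupp p)) => hx.
  rewrite (bigD1_seq x) ?msupp_uniq //= eqxx mulr1 big1 ?addr0 //.
  move=> m hm; case: ifP => // _. by rewrite (negbTE hm) mulr0.
rewrite big1_seq ?memN_msupp_eq0 //; first by case: ifP.
move=> m /= hm; case: ifP => // _.
have -> : (m == x) = false by apply/negbTE; apply: contraNneq hx => <-.
by rewrite mulr0.
Qed.

Lemma coef_list (ms : seq 'X_{1..4}) (c : 'I_(size ms) -> K) x :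
  (\sum_(k < size ms) c k *: ('X_[nth 0%MM ms k] : R))@_x =
  \sum_(k < size ms) c k * (nth 0%MM ms k == x)%:R.
Proof. rewrite raddf_sum /=; apply: eq_bigr => k _. by rewrite mcoeffZ mcoeffX. Qed.

Lemma coef_list_nth (ms : seq 'X_{1..4}) (c : 'I_(size ms) -> K) (k0 : 'I_(size ms)) :
  uniq ms ->
  (\sum_(k < size ms) c k *: ('X_[nth 0%MM ms k] : R))@_(nth 0%MM ms k0) = c k0.
Proof.
move=> hu; rewrite coef_list (bigD1 k0) //= eqxx mulr1 big1 ?addr0 //.
move=> k hk; rewrite nth_uniq //; have -> : (k == k0 :> nat) = false by exact: negbTE hk.
by rewrite mulr0.
Qed.

Lemma coef_list_notin (ms : seq 'X_{1..4}) (c : 'I_(size ms) -> K) x :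
  x \notin ms ->
  (\sum_(k < size ms) c k *: ('X_[nth 0%MM ms k] : R))@_x = 0.
Proof.
move=> hx; rewrite coef_list big1 // => k _.
have -> : (nth 0%MM ms k == x) = false.
  by apply/negbTE; apply: contraNneq hx => <-; apply: mem_nth.
by rewrite mulr0.
Qed.

Lemma poly_on_list (ms : seq 'X_{1..4}) (q : R) : uniq ms ->
  (forall x, q@_x != 0 -> x \in ms) ->
  q = \sum_(k < size ms) q@_(nth 0%MM ms k) *: 'X_[nth 0%MM ms k].
Proof.
move=> hu hq; apply/mpolyP => x.
case: (boolP (x \in ms)) => hx.
  have hi : (index x ms < size ms)%N by rewrite index_mem.
  have := coef_list_nth (fun k => q@_(nth 0%MM ms k)) (Ordinal hi) hu.
  by rewrite /= (nth_index 0%MM hx) => ->.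
rewrite coef_list_notin //. apply/eqP; apply: contraNT hx; exact: hq.
Qed.
End Coef.

End M_GB.
Import M_GB.

Module M_GC.
Set Implicit Arguments. Unset Strict Implicit. Unset Printing Implicit Defensive.
Import Order.Theory GRing.Theory.
Local Open Scope ring_scope.

Section Std.
Variable K : closedFieldType.
Local Notation R := {mpoly K[4]}.
Variable I : R -> Prop.
Hypothesis hI : is_ideal I.

Definition Nstd (m : 'X_{1..4}) : Prop := ~ exists f, I f /\ f != 0 /\ mlead f = m.

Lemma mleadcX (u : 'X_{1..4}) : mleadc ('X_[u] : R) = 1.
Proof. by rewrite mleadXm mcoeffX eqxx. Qed.

Lemma Nstd_sub m u : Nstd (u + m)%MM -> Nstd m.
Proof.
move=> h [f [hf [hf0 hm]]]; apply: h; exists ('X_[u] * f); split; first exact: IM.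
have hc : mleadc ('X_[u] : R) * mleadc f != 0 by rewrite mleadcX mul1r mleadc_eq0.
split; last by rewrite mleadM_proper // mleadXm hm.
apply: mulf_neq0 => //. by rewrite -mleadc_eq0 mleadcX oner_eq0.
Qed.

Lemma reduce p : exists q, I (p - q) /\ forall x, q@_x != 0 -> Nstd x.
Proof.
elim/mleadrect: p => p IH.
case: (eqVneq p 0) => [->|hp].
  exists 0; split; [by rewrite subr0; exact: I0 | by move=> x; rewrite mcoeff0 eqxx].
set m := mlead p.
case: (Classical_Prop.classic (Nstd m)) => hN.
  set z := p@_m *: ('X_[m] : R).
  have hz x : z@_x != 0 -> x = m.
    rewrite /z mcoeffZ mcoeffX; case: (eqVneq m x) => [-> //|_]; by rewrite mulr0 eqxx.
  case: (eqVneq (p - z) 0) => hp'.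
    exists z; split; first by rewrite hp'; exact: I0.
    by move=> x /hz ->.
  have [q [hq1 hq2]] := IH (p - z) (ltm_mleadD hp hp').
  exists (q + z); split.
    have -> : p - (q + z) = (p - z) - q by ring.
    exact: hq1.
  move=> x; rewrite mcoeffD => hx.
  case: (eqVneq (q@_x) 0) => hqx; last exact: hq2.
  by move: hx; rewrite hqx add0r => /hz ->.
have [f [hf [hf0 hfm]]] : exists f, I f /\ f != 0 /\ mlead f = m by apply: Classical_Prop.NNPP.
have hfc : f@_m != 0 by rewrite -hfm mleadc_eq0.
set c := p@_m / f@_m.
set p' := p - c *: f.
have hcm : p'@_m = 0 by rewrite /p' mcoeffB mcoeffZ /c divfK // subrr.
have hle x : p'@_x != 0 -> (x <= m)%O.
  rewrite /p' mcoeffB mcoeffZ => hx.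
  case: (eqVneq (p@_x) 0) => hpx.
    have : f@_x != 0 by apply: contraNneq hx => ->; rewrite hpx mulr0 subrr.
    rewrite -mcoeff_msupp -hfm; exact: msupp_le_mlead.
  by apply: msupp_le_mlead; rewrite mcoeff_msupp.
case: (eqVneq p' 0) => hp'.
  exists 0; split; last by move=> x; rewrite mcoeff0 eqxx.
  have -> : p - 0 = p' + c *: f by rewrite /p' subr0 subrK.
  by rewrite hp' add0r; apply: IZ.
have hlt : (mlead p' < m)%O.
  have hs : p'@_(mlead p') != 0 by rewrite mleadc_eq0.
  rewrite lt_neqAle hle // andbT. apply: contraNneq hs => ->. by rewrite hcm.
have [q [hq1 hq2]] := IH p' hlt.
exists q; split => //.
have -> : p - q = (p' - q) + c *: f by rewrite /p'; ring.
by apply: ID => //; apply: IZ.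
Qed.

Lemma std_indep (ms : seq 'X_{1..4}) : uniq ms -> (forall x, x \in ms -> Nstd x) ->
  forall c : 'I_(size ms) -> K,
  I (\sum_(k < size ms) c k *: ('X_[nth 0%MM ms k] : R)) -> forall k, c k = 0.
Proof.
move=> hu hN c hIc k.
set p := \sum_(k < size ms) c k *: ('X_[nth 0%MM ms k] : R) in hIc.
case: (eqVneq p 0) => hp.
  by have := coef_list_nth c k hu; rewrite -/p hp mcoeff0.
exfalso.
have hs : p@_(mlead p) != 0 by rewrite mleadc_eq0.
have hin : mlead p \in ms.
  apply: contraNT hs => hn. by rewrite /p coef_list_notin.
by apply: (hN _ hin); exists p.
Qed.

Lemma std_span (d : nat) (ms : seq 'X_{1..4}) : is_homogeneous_ideal I -> uniq ms ->
  (forall x, mdeg x = d -> Nstd x -> x \in ms) ->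
  forall p : R, p \is d.-homog ->
  exists c : 'I_(size ms) -> K, I (p - \sum_(k < size ms) c k *: 'X_[nth 0%MM ms k]).
Proof.
move=> [_ hH] hu hms p hp.
have [q [hq1 hq2]] := reduce p.
set r := pihomog mdeg d q.
have hr : r = \sum_(k < size ms) r@_(nth 0%MM ms k) *: 'X_[nth 0%MM ms k].
  apply: poly_on_list => // x; rewrite /r mcoeff_pihomog.
  case: (mdeg x =P d) => [hd hx|_]; last by rewrite eqxx.
  by apply: hms => //; apply: hq2.
exists (fun k => r@_(nth 0%MM ms k)); rewrite -hr.
have := hH _ d hq1. by rewrite pihomogB pihomog_dE.
Qed.
End Std.

End M_GC.
Import M_GC.

Module M_GD.
Set Implicit Arguments. Unset Strict Implicit. Unset Printing Implicit Defensive.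
Import Order.Theory GRing.Theory.
Local Open Scope ring_scope.

Definition mk (s : seq nat) : 'X_{1..4} := [multinom nth 0%N s i | i < 4].
Lemma mkE s i : mk s i = nth 0%N s i. Proof. by rewrite mnmE. Qed.

Lemma mdeg_mk s : size s = 4%N -> mdeg (mk s) = sumn s.
Proof.
case: s => [|a [|b [|c [|d [|e s]]]]] // _.
rewrite mdegE !big_ord_recr big_ord0 /= !mkE /=. lia.
Qed.

Lemma mk_inj s s' : size s = 4%N -> size s' = 4%N -> mk s = mk s' -> s = s'.
Proof.
case: s => [|a [|b [|c [|d [|e s]]]]] // _.
case: s' => [|a' [|b' [|c' [|d' [|e' s']]]]] // _.
move/mnmP => h.
have := h (0 : 'I_4); have := h (1 : 'I_4); have := h (2 : 'I_4); have := h (3 : 'I_4).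
rewrite !mkE /= => -> -> -> ->. by [].
Qed.

Lemma unmk (x : 'X_{1..4}) : exists s, s \in mons 4 (mdeg x) /\ mk s = x.
Proof.
exists [:: x 0; x 1; x 2; x 3]%R.
have hx : mk [:: x 0; x 1; x 2; x 3]%R = x.
  apply/mnmP => i; rewrite mkE. case: i => [[|[|[|[|i]]]] hi] //=; by congr (x _); apply: val_inj.
split => //; rewrite mem_mons /=. apply/eqP.
have := @mdeg_mk [:: x 0; x 1; x 2; x 3]%R erefl. rewrite hx => ->. by rewrite /= addn0.
Qed.

Lemma mk_dec s i : (i < 4)%N -> (0 < nth 0%N s i)%N -> mk s = (U_(inord i) + mk (dec s i))%MM.
Proof.
move=> hi hs; apply/mnmP => j; rewrite mnmDE mnm1E !mkE /dec nth_set_nth /=.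
case: (eqVneq j (inord i)) => [->|hne].
  rewrite inordK // eqxx /=. lia.
have -> : (j == i :> nat) = false.
  apply/negbTE; apply: contra hne => /eqP hj. apply/eqP/val_inj. by rewrite /= inordK.
by [].
Qed.

Lemma mk_dec_big s i : (4 <= i)%N -> mk (dec s i) = mk s.
Proof.
move=> hi; apply/mnmP => j; rewrite !mkE /dec nth_set_nth /=.
have -> : (j == i :> nat) = false by apply/negbTE; have := ltn_ord j; lia.
by [].
Qed.

Section Link.
Variable K : closedFieldType.
Local Notation R := {mpoly K[4]}.
Variable I : R -> Prop.
Hypothesis hH : is_homogeneous_ideal I.

Definition Nb (m : 'X_{1..4}) : bool :=
  if ClassicalDescription.excluded_middle_informative (Nstd I m) then true else false.

Lemma NbP m : Nb m <-> Nstd I m.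
Proof. rewrite /Nb; case: ClassicalDescription.excluded_middle_informative => //. Qed.

Definition Pb (s : seq nat) := Nb (mk s).

Lemma dc_Pb : dc Pb.
Proof.
move=> s i; rewrite /Pb => /NbP hs hi; apply/NbP.
case: (ltnP i 4) => hi4; last by rewrite (mk_dec_big s hi4).
move: hs; rewrite (mk_dec hi4 hi). exact: (Nstd_sub hH.1).
Qed.

Definition Lst d := [seq mk s | s <- mons 4 d & Pb s].

Lemma Lst_uniq d : uniq (Lst d).
Proof.
rewrite map_inj_in_uniq ?filter_uniq ?uniq_mons //.
move=> s s'; rewrite !mem_filter => /andP[_ h1] /andP[_ h2].
move: h1 h2; rewrite !mem_mons => /andP[/eqP h1 _] /andP[/eqP h2 _]. exact: mk_inj.
Qed.

Lemma size_Lst d : size (Lst d) = count Pb (mons 4 d).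
Proof. by rewrite size_map size_filter. Qed.

Lemma Lst_N d x : x \in Lst d -> Nstd I x.
Proof. by case/mapP => s; rewrite mem_filter => /andP[/NbP h _] ->. Qed.

Lemma Lst_deg d x : x \in Lst d -> mdeg x = d.
Proof.
case/mapP => s; rewrite mem_filter mem_mons => /andP[_ /andP[/eqP h1 /eqP h2]] ->.
by rewrite mdeg_mk.
Qed.

Lemma Lst_all d x : mdeg x = d -> Nstd I x -> x \in Lst d.
Proof.
move=> hd hN; have [s [hs hx]] := unmk x.
rewrite -hx; apply: map_f. rewrite mem_filter /Pb hx -hd hs andbT. by apply/NbP.
Qed.

Lemma hilb_bound d a b : (a <= d)%N -> (0 < d)%N ->
  hilb_val I d a -> hilb_val I d.+1 b -> (b <= a)%N.
Proof.
have hI := hH.1.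
move=> had hd [s [hs1 hs2 hs3]] [t [ht1 ht2 ht3]].
have c1 : (count Pb (mons 4 d) <= a)%N.
  rewrite -size_Lst.
  apply: (dim_le hI (s := s) (t := fun k => 'X_[nth 0%MM (Lst d) k])).
    move=> k; apply: hs3. rewrite dhomogX. apply/eqP; apply: Lst_deg. exact: mem_nth.
  apply: std_indep; [exact: Lst_uniq | exact: Lst_N].
have c2 : (count Pb (mons 4 d.+1) <= count Pb (mons 4 d))%N.
  apply: mac => //; [exact: dc_Pb | lia].
suff : (b <= count Pb (mons 4 d.+1))%N by lia.
rewrite -size_Lst.
apply: (dim_le hI (s := fun k => 'X_[nth 0%MM (Lst d.+1) k]) (t := t)) => //.
move=> k; apply: std_span => //; [exact: Lst_uniq | exact: Lst_all].
Qed.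
End Link.

End M_GD.
Import M_GD.

Module M_GE.
Set Implicit Arguments. Unset Strict Implicit. Unset Printing Implicit Defensive.
Import Order.Theory GRing.Theory.
Local Open Scope ring_scope.

Lemma lepm_anti (m m' : 'X_{1..4}) : (m <= m')%MM -> (m' <= m)%MM -> m = m'.
Proof.
move=> /mnm_lepP h1 /mnm_lepP h2; apply/mnmP => i; apply/eqP; rewrite eqn_leq h1 h2 //.
Qed.

Lemma mdegB_le (u m : 'X_{1..4}) : (u <= m)%MM -> mdeg (m - u) = (mdeg m - mdeg u)%N.
Proof. move=> h; have := submK h; move/(congr1 mdeg); rewrite mdegD => <-. lia. Qed.

Lemma lepm_mdeg (u m : 'X_{1..4}) : (u <= m)%MM -> (mdeg u <= mdeg m)%N.
Proof. move=> h; have := submK h; move/(congr1 mdeg); rewrite mdegD => <-. lia. Qed.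

Lemma lepm_eq (u m : 'X_{1..4}) : (u <= m)%MM -> mdeg u = mdeg m -> u = m.
Proof.
move=> h hd; have := submK h; have : mdeg (m - u) = 0%N by rewrite mdegB_le // hd subnn.
move/eqP; rewrite mdeg_eq0 => /eqP ->. by rewrite add0m.
Qed.

Section Coef.
Variable K : closedFieldType.
Local Notation R := {mpoly K[4]}.

Lemma coefXM (u m : 'X_{1..4}) (p : R) :
  ('X_[u] * p)@_m = if (u <= m)%MM then p@_(m - u) else 0.
Proof.
rewrite mulrC; case: ifP => h.
  by rewrite -{1}(submK h) addmC mcoeffMX.
apply/memN_msupp_eq0; rewrite (perm_mem (msuppMX p u)).
apply/mapP => -[m' _ hm]. move: h; rewrite hm. by rewrite lem_addr.
Qed.
End Coef.

Section TwoMon.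
Variable K : closedFieldType.
Local Notation R := {mpoly K[4]}.
Variables (m1 m2 : 'X_{1..4}) (j : nat).
Hypothesis hne : m1 != m2.
Hypothesis hd1 : mdeg m1 = j.
Hypothesis hd2 : mdeg m2 = j.
Hypothesis hdisj : forall v, m1 v = 0%N \/ m2 v = 0%N.

Definition inD (m : 'X_{1..4}) := ((m <= m1)%MM && (m != m1)) || ((m <= m2)%MM && (m != m2)).

Definition Iset (p : R) : Prop := (forall m, inD m -> p@_m = 0) /\ p@_m1 + p@_m2 = 0.

Lemma inD_deg m : inD m -> (mdeg m < j)%N.
Proof.
case/orP => /andP[h1 h2].
  rewrite ltn_neqAle -hd1 lepm_mdeg // andbT. apply: contra h2 => /eqP h. by rewrite (lepm_eq h1 h).
rewrite ltn_neqAle -hd2 lepm_mdeg // andbT. apply: contra h2 => /eqP h. by rewrite (lepm_eq h1 h).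
Qed.

Lemma inD_down (mA : 'X_{1..4}) m u : (mA == m1) || (mA == m2) ->
  (m <= mA)%MM -> (u <= m)%MM -> u != 0%MM -> inD (m - u)%MM.
Proof.
move=> hA h1 h2 hu.
have hle : (m - u <= mA)%MM := lepm_trans (lem_subr _ _) h1.
have hneq : (m - u)%MM != mA.
  apply/eqP => e. have := lepm_mdeg h1. rewrite -e mdegB_le //.
  have : (0 < mdeg u)%N by rewrite lt0n mdeg_eq0. have := lepm_mdeg h2. lia.
by case/orP: hA => /eqP e; rewrite /inD -e hle hneq ?orbT.
Qed.

Lemma IsetXM u p : Iset p -> Iset ('X_[u] * p).
Proof.
case: (eqVneq u 0%MM) => [->|hu]; first by rewrite mpolyX0 mul1r.
move=> [hp1 hp2].
have hz : forall mA m, (mA == m1) || (mA == m2) -> (m <= mA)%MM -> ('X_[u] * p)@_m = 0.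
  move=> mA m hA hm; rewrite coefXM; case: ifP => // hum.
  apply: hp1; exact: (inD_down hA).
split.
  by move=> m /orP[] /andP[h _]; [apply: (hz m1) | apply: (hz m2)]; rewrite ?eqxx ?orbT.
by rewrite (hz m1) ?(hz m2) ?eqxx ?orbT ?lepm_refl ?addr0.
Qed.

Lemma Iset0 : Iset 0.
Proof. by split; [move=> m _; rewrite mcoeff0 | rewrite !mcoeff0 addr0]. Qed.

Lemma IsetD p q : Iset p -> Iset q -> Iset (p + q).
Proof.
move=> [hp1 hp2] [hq1 hq2]; split.
  by move=> m hm; rewrite mcoeffD hp1 ?hq1 ?addr0.
by rewrite !mcoeffD addrACA hp2 hq2 addr0.
Qed.

Lemma IsetZ c p : Iset p -> Iset (c *: p).
Proof.
move=> [hp1 hp2]; split.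
  by move=> m hm; rewrite mcoeffZ hp1 ?mulr0.
by rewrite !mcoeffZ -mulrDr hp2 mulr0.
Qed.

Lemma Iset_ideal : is_ideal Iset.
Proof.
split; [exact: Iset0 | exact: IsetD |].
move=> r p hp; rewrite (mpolyE r) mulr_suml.
apply: (big_ind Iset); [exact: Iset0 | exact: IsetD |].
move=> u _; rewrite -scalerAl; apply: IsetZ; exact: IsetXM.
Qed.

Lemma Iset_homog : is_homogeneous_ideal Iset.
Proof.
split; first exact: Iset_ideal.
move=> p d [hp1 hp2]; split.
  by move=> m hm; rewrite mcoeff_pihomog hp1 //; case: ifP.
rewrite !mcoeff_pihomog hd1 hd2; case: ifP => _ //. by rewrite addr0.
Qed.

Lemma hilb_list i (L : seq 'X_{1..4}) : i != j -> uniq L ->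
  (forall m, (m \in L) = inD m && (mdeg m == i)) -> hilb_val Iset i (size L).
Proof.
move=> hij hu hL.
have hLd k : mdeg (nth 0%MM L k) = i -> True by [].
exists (fun k : 'I_(size L) => 'X_[nth 0%MM L k]); split.
- move=> k; rewrite dhomogX. have := mem_nth 0%MM (ltn_ord k). by rewrite hL => /andP[_].
- move=> c [h1 _] k. have := h1 (nth 0%MM L k).
  rewrite coef_list_nth //; apply. have := mem_nth 0%MM (ltn_ord k). by rewrite hL => /andP[].
move=> p hp; exists (fun k => p@_(nth 0%MM L k)); split.
  move=> m hm; rewrite mcoeffB.
  case: (boolP (mdeg m == i)) => hmi.
    have hmL : m \in L by rewrite hL hm hmi.
    have hi : (index m L < size L)%N by rewrite index_mem.
    have := coef_list_nth (fun k => p@_(nth 0%MM L k)) (Ordinal hi) hu.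
    rewrite /= (nth_index 0%MM hmL) => ->. by rewrite subrr.
  rewrite coef_list_notin; last by rewrite hL negb_and hmi orbT.
  by rewrite (dhomog_nemf_coeff hp) ?subr0.
have hn : forall mA, mdeg mA = j -> (p - \sum_(k < size L) p@_(nth 0%MM L k) *: 'X_[nth 0%MM L k])@_mA = 0.
  move=> mA hA; rewrite mcoeffB coef_list_notin; last by rewrite hL hA eq_sym (negbTE hij) andbF.
  rewrite (dhomog_nemf_coeff hp) ?subr0 //; apply: contraNneq hij => <-; apply/eqP; exact: hA.
by rewrite !hn ?addr0.
Qed.

Lemma hilb_top : hilb_val Iset j 1.
Proof.
exists (fun _ => 'X_[m1]); split.
- by move=> _; rewrite dhomogX; apply/eqP; exact: hd1.
- move=> c [_ h2] k; rewrite ord1; move: h2; rewrite big_ord1 !mcoeffZ !mcoeffX eqxx (negbTE hne).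
  by rewrite mulr1 mulr0 addr0.
move=> p hp; exists (fun _ => p@_m1 + p@_m2); split.
  move=> m hm; rewrite big_ord1 mcoeffB mcoeffZ mcoeffX.
  have hdm := inD_deg hm.
  have -> : (m1 == m) = false by apply/negbTE; apply/eqP => e; move: hdm; rewrite -e hd1 ltnn.
  rewrite (dhomog_nemf_coeff hp) ?mulr0 ?subr0 //. by rewrite neq_ltn hdm.
rewrite big_ord1 !mcoeffB !mcoeffZ !mcoeffX eqxx (negbTE hne). rewrite mulr1 mulr0 subr0. ring.
Qed.

Lemma hilb_high i : (j < i)%N -> hilb_val Iset i 0.
Proof.
move=> hi; exists (fun _ => 0); split; [by case | by move=> c _ []|].
move=> p hp; exists (fun _ => 0); rewrite big_ord0 subr0; split.
  move=> m hm; rewrite (dhomog_nemf_coeff hp) //. change (mdeg m != i).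
  have := inD_deg hm. rewrite neq_ltn. lia.
rewrite !(dhomog_nemf_coeff hp) ?addr0 //.
all: first [change (mdeg m1 != i); rewrite hd1; lia | change (mdeg m2 != i); rewrite hd2; lia].
Qed.

Lemma soc_aux (mA mB : 'X_{1..4}) (f : R) m :
  (mA == m1) && (mB == m2) || (mA == m2) && (mB == m1) ->
  (forall v : 'I_4, Iset ('X_v * f)) -> (m <= mA)%MM -> m != mA -> f@_m = 0.
Proof.
move=> hAB hf hle hneq.
have hAB' : (forall v, mA v = 0%N \/ mB v = 0%N) /\ ((mA == m1) || (mA == m2))
   /\ (forall g : R, Iset g -> g@_mA + g@_mB = 0).
  case/orP: hAB => /andP[/eqP -> /eqP ->].
    split; first by []. split; first by rewrite eqxx. by move=> g [_ h].
  split; first by move=> v; case: (hdisj v); [right|left].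
  split; first by rewrite eqxx orbT. by move=> g [_ h]; rewrite addrC.
case: hAB' => hd [hA hsum].
have [v hv] : exists v, (m v < mA v)%N.
  case: (boolP [exists v, (m v < mA v)%N]) => [/existsP //|/existsPn H].
  exfalso; move/eqP: hneq; apply; apply: lepm_anti => //.
  apply/mnm_lepP => w; have := H w; rewrite -leqNgt. by [].
set m' := (U_(v) + m)%MM.
have hc : ('X_v * f)@_m' = f@_m.
  rewrite coefXM lem_addr /m' addmC. by rewrite addmK.
have hm'le : (m' <= mA)%MM.
  apply/mnm_lepP => w; rewrite mnmDE mnm1E.
  case: (eqVneq v w) => [<-|_] /=; first by rewrite add1n.
  by rewrite add0n; move/mnm_lepP: hle.
case: (eqVneq m' mA) => hm'.
  have hB : ('X_v * f)@_mB = 0.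
    rewrite coefXM; case: ifP => // /mnm_lepP /(_ v).
    rewrite mnm1E eqxx.
    have : (0 < mA v)%N by lia.
    case: (hd v) => ->; lia.
  have := hsum _ (hf v). by rewrite hB addr0 -hm' hc.
rewrite -hc; case: (hf v) => h _; apply: h.
by case/orP: hA => /eqP e; rewrite /inD -e hm'le hm' ?orbT.
Qed.

Lemma deg_shift (v : 'I_4) : mdeg (U_(v) + m1)%MM = j.+1.
Proof. by rewrite mdegD mdeg1 hd1. Qed.

Lemma gor_quot : gorenstein_quot Iset.
Proof.
exists 'X_[m1]; split.
- move=> [_]; rewrite !mcoeffX eqxx (negbTE hne) addr0. apply/eqP; exact: oner_neq0.
- move=> v; rewrite -mpolyXD; split.
    move=> m hm; rewrite mcoeffX.
    have : mdeg (U_(v) + m1)%MM != mdeg m by rewrite deg_shift; have := inD_deg hm; lia.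
    move=> hdeg; case: (eqVneq (U_(v) + m1)%MM m) => [e|//].
    by move: hdeg; rewrite e eqxx.
  have e1 : (U_(v) + m1 == m1)%MM = false.
    by apply/negbTE; apply/eqP => /(congr1 mdeg); rewrite deg_shift hd1; lia.
  have e2 : (U_(v) + m1 == m2)%MM = false.
    by apply/negbTE; apply/eqP => /(congr1 mdeg); rewrite deg_shift hd2; lia.
  by rewrite !mcoeffX e1 e2 addr0.
move=> f hf.
have key : forall m, inD m -> f@_m = 0.
  move=> m /orP[] /andP[h1 h2].
    by apply: (soc_aux (mA := m1) (mB := m2)) => //; rewrite !eqxx.
  by apply: (soc_aux (mA := m2) (mB := m1)) => //; rewrite !eqxx orbT.
exists (f@_m1 + f@_m2); split.
  move=> m hm; rewrite mcoeffB mcoeffZ mcoeffX key //.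
  have -> : (m1 == m) = false.
    by apply/negbTE; apply/eqP => e; have := inD_deg hm; rewrite -e hd1 ltnn.
  by rewrite mulr0 subr0.
rewrite !mcoeffB !mcoeffZ !mcoeffX eqxx (negbTE hne). rewrite mulr1 mulr0 subr0. ring.
Qed.

End TwoMon.

End M_GE.
Import M_GE.

Module M_GF.
Set Implicit Arguments. Unset Strict Implicit. Unset Printing Implicit Defensive.
Import Order.Theory GRing.Theory.
Local Open Scope ring_scope.

Definition mk4 (a b c d : nat) := mk [:: a; b; c; d].

Lemma mk4E a b c d (i : 'I_4) : mk4 a b c d i = nth 0%N [:: a; b; c; d] i.
Proof. by rewrite /mk4 mkE. Qed.

Lemma mk4_surj (m : 'X_{1..4}) : m = mk4 (m 0%R) (m 1%R) (m 2%R) (m 3%R).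
Proof.
apply/mnmP => i; rewrite mk4E. case: i => [[|[|[|[|i]]]] hi] //=; by congr (m _); apply: val_inj.
Qed.

Lemma lep_mk4 a b c d a' b' c' d' :
  (mk4 a b c d <= mk4 a' b' c' d')%MM = [&& (a <= a')%N, (b <= b')%N, (c <= c')%N & (d <= d')%N].
Proof.
apply/mnm_lepP/and4P.
  move=> h; have := h 0%R; have := h 1%R; have := h 2%R; have := h 3%R; rewrite !mk4E /=.
  by move=> *; split.
case=> h1 h2 h3 h4 i; rewrite !mk4E. by case: i => [[|[|[|[|i]]]] hi].
Qed.

Lemma eq_mk4 a b c d a' b' c' d' :
  (mk4 a b c d == mk4 a' b' c' d') = [&& a == a', b == b', c == c' & d == d'].
Proof.
apply/eqP/and4P.
  by move/(@mk_inj [:: a; b; c; d] [:: a'; b'; c'; d'] erefl erefl) => [-> -> -> ->].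
by case=> /eqP -> /eqP -> /eqP -> /eqP ->.
Qed.

Lemma mdeg_mk4 a b c d : mdeg (mk4 a b c d) = (a + b + c + d)%N.
Proof. rewrite /mk4 mdeg_mk //=. lia. Qed.

Section Conc.
Variables (j p q : nat).
Hypothesis hj : (6 <= j)%N.
Hypothesis hp : (1 <= p <= 2)%N.
Hypothesis hq : (1 <= q <= 2)%N.

Definition M1 := mk4 (j - p) p 0 0.
Definition M2 := mk4 0 0 (j - q) q.

Lemma M12 : M1 != M2. Proof. rewrite eq_mk4; lia. Qed.
Lemma dM1 : mdeg M1 = j. Proof. rewrite mdeg_mk4; lia. Qed.
Lemma dM2 : mdeg M2 = j. Proof. rewrite mdeg_mk4; lia. Qed.
Lemma disjM v : M1 v = 0%N \/ M2 v = 0%N.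
Proof. rewrite !mk4E. case: v => [[|[|[|[|v]]]] hv] //=; by [left|right]. Qed.

Definition LA i := [seq mk4 (i - t) t 0 0 | t <- iota (i - (j - p)) ((minn p i - (i - (j - p))).+1)].
Definition LB i := [seq mk4 0 0 (i - t) t | t <- iota (i - (j - q)) ((minn q i - (i - (j - q))).+1)].

Lemma mem_LA i a b c d : (i < j)%N -> (mk4 a b c d \in LA i) =
  [&& c == 0%N, d == 0%N, (a + b == i)%N, (i - (j - p) <= b)%N & (b <= minn p i)%N].
Proof.
move=> hij; apply/mapP/idP.
  case=> t; rewrite mem_iota => ht e; move: ht; move/eqP: e; rewrite eq_mk4; lia.
move=> h; exists b; first by rewrite mem_iota; lia.
apply/eqP; rewrite eq_mk4; lia.
Qed.

Lemma mem_LB i a b c d : (i < j)%N -> (mk4 a b c d \in LB i) =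
  [&& a == 0%N, b == 0%N, (c + d == i)%N, (i - (j - q) <= d)%N & (d <= minn q i)%N].
Proof.
move=> hij; apply/mapP/idP.
  case=> t; rewrite mem_iota => ht e; move: ht; move/eqP: e; rewrite eq_mk4; lia.
move=> h; exists d; first by rewrite mem_iota; lia.
apply/eqP; rewrite eq_mk4; lia.
Qed.

Lemma memL i (m : 'X_{1..4}) : (1 <= i < j)%N ->
  (m \in LA i ++ LB i) = inD M1 M2 m && (mdeg m == i).
Proof.
move=> hi; rewrite (mk4_surj m) mem_cat mem_LA ?mem_LB; try lia.
rewrite /inD /M1 /M2 !lep_mk4 !eq_mk4 mdeg_mk4.
lia.
Qed.

Lemma uniqL i : (1 <= i < j)%N -> uniq (LA i ++ LB i).
Proof.
move=> hi; rewrite cat_uniq; apply/and3P; split.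
- rewrite map_inj_uniq ?iota_uniq // => x y /eqP; rewrite eq_mk4; lia.
- apply/hasPn => x /mapP[t _ ->]. rewrite mem_LA; lia.
- rewrite map_inj_uniq ?iota_uniq // => x y /eqP; rewrite eq_mk4; lia.
Qed.

Lemma sizeL i : size (LA i ++ LB i) =
  ((minn p i - (i - (j - p))).+1 + (minn q i - (i - (j - q))).+1)%N.
Proof. by rewrite size_cat !size_map !size_iota. Qed.
End Conc.

End M_GF.
Import M_GF.

Module M_GG.
Set Implicit Arguments. Unset Strict Implicit. Unset Printing Implicit Defensive.
Import Order.Theory GRing.Theory.
Local Open Scope ring_scope.

Lemma Hseq_val j a i : (6 <= j)%N -> (1 <= i < j)%N ->
  Hseq j a i = (if i == 1%N then 4 else if i == j.-1 then 4 else a)%N.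
Proof.
move=> hj hi; rewrite /Hseq.
have -> : (i == 0%N) = false by apply/negbTE; lia.
case: (i == 1%N) => //. case: (i == j.-1) => //.
have -> : (i == j) = false by apply/negbTE; lia.
by have -> : (i < j)%N by lia.
Qed.

Lemma Hseq_j j a : (6 <= j)%N -> Hseq j a j = 1%N.
Proof.
move=> hj; rewrite /Hseq.
have -> : (j == 0%N) = false by apply/negbTE; lia.
have -> : (j == 1%N) = false by apply/negbTE; lia.
have -> : (j == j.-1) = false by apply/negbTE; lia.
by rewrite eqxx.
Qed.

Lemma gor_exists (K : closedFieldType) j a : (6 <= j)%N -> (4 <= a <= 6)%N ->
  gorenstein_sequence K (Hseq j a) j.
Proof.
move=> hj ha.
pose p := if a == 4%N then 1%N else 2%N.
pose q := if a == 6%N then 2%N else 1%N.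
have hp : (1 <= p <= 2)%N by rewrite /p; case: ifP.
have hq : (1 <= q <= 2)%N by rewrite /q; case: ifP.
have hapq : a = (p + q + 2)%N by rewrite /p /q; case: ifP => /eqP; case: ifP => /eqP; lia.
have hne : M1 j p != M2 j q := M12 hj hp hq.
have hd1 : mdeg (M1 j p) = j := @dM1 j p q hj hp hq.
have hd2 : mdeg (M2 j q) = j := @dM2 j p q hj hp hq.
have hdisj : forall v, M1 j p v = 0%N \/ M2 j q v = 0%N := disjM j p q.
exists (Iset (K:=K) (M1 j p) (M2 j q)); split.
- exact: Iset_homog hne hd1 hd2.
- exact: gor_quot hne hd1 hd2 hdisj.
- move=> i hi.
  have [hlt|hge] := ltnP i j; last first.
    have -> : i = j by lia.
    by rewrite Hseq_j //; exact: hilb_top hne hd1 hd2.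
  case: i hi hlt => [|i] hi hlt.
    rewrite /Hseq /=.
    apply: (hilb_list K hd1 hd2 (L := [:: 0%MM])) => //; first by lia.
    move=> m; rewrite (mk4_surj m) mem_seq1.
    have -> : 0%MM = mk4 0 0 0 0 by apply/mnmP => v; rewrite mk4E mnm0E; case: v => [[|[|[|[|v]]]] hv].
    rewrite /inD /M1 /M2 !lep_mk4 !eq_mk4 mdeg_mk4. lia.
  have hsz := sizeL j p q i.+1.
  rewrite (Hseq_val a hj (_ : (1 <= i.+1 < j)%N)); last by lia.
  have -> : (if i.+1 == 1%N then 4 else if i.+1 == j.-1 then 4 else a)%N =
            size (LA j p i.+1 ++ LB j q i.+1) by rewrite hsz; case: ifP => /eqP h1; [|case: ifP => /eqP h2]; lia.
  apply: (hilb_list K hd1 hd2).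
  + lia.
  + apply: (uniqL hj hp hq); lia.
  + move=> m; apply: (memL hj hp hq); lia.
- by rewrite Hseq_j.
- move=> i hi; exact: (hilb_high K hne hd1 hd2 hi).
Qed.

End M_GG.
Import M_GG.

Module M_FIN.
Import GRing.Theory Num.Theory.
Local Open Scope ring_scope.

Lemma gor_necessary (K : closedFieldType) j a : (6 <= j)%N -> (a <= 6)%N ->
  gorenstein_sequence K (Hseq j a) j -> (4 <= a)%N.
Proof.
move=> hj ha [I [hH _ hv _ _]].
case: (leqP 4 a) => // ha3; exfalso.
have h1 := hv (j - 2)%N (leq_subr _ _).
rewrite (@Hseq_mid j a hj ha) in h1; try lia.
have h2 := hv (j - 1)%N (leq_subr _ _).
have e : Hseq j a (j - 1) = 4%N.
  rewrite /Hseq.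
  have -> : (j - 1 == 0)%N = false by apply/negbTE; lia.
  have -> : (j - 1 == 1)%N = false by apply/negbTE; lia.
  have -> : (j - 1 == j.-1)%N by apply/eqP; lia.
  by [].
rewrite e in h2.
have e2 : (j - 1 = (j - 2).+1)%N by lia.
rewrite e2 in h2.
have := hilb_bound hH (_ : (a <= j - 2)%N) (_ : (1 <= j - 2)%N) h1 h2.
move=> /(_ ltac:(lia)) /(_ ltac:(lia)). lia.
Qed.


End M_FIN.
Import M_FIN.

Unset Implicit Arguments.
Import GRing.Theory Num.Theory.
Local Open Scope ring_scope.

Theorem proposition4p4 (K : closedFieldType) (j a : nat) :
  (6 <= j)%N -> (a <= 6)%N ->
  [/\ (gorenstein_sequence K (Hseq j a) j <-> O_sequence (DeltaH_half (Hseq j a) j)),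
      (O_sequence (DeltaH_half (Hseq j a) j) <->
         noninc_after_first_failure (DeltaH_half (Hseq j a) j)) &
      (gorenstein_sequence K (Hseq j a) j -> a <> 2%N /\ a <> 3%N)].
Proof.
move=> hj ha.
have hO := @Oseq_iff j a hj ha.
have hN := @noninc_iff j a hj ha.
have hG : gorenstein_sequence K (Hseq j a) j <-> (4 <= a)%N.
  split; first exact: gor_necessary.
  move=> h4; apply: gor_exists => //; lia.
split.
- by rewrite hG hO.
- by rewrite hO hN.
- move/hG => h4; split; lia.
Qed.
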